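(* Let $\mathcal{C}$ be a $t$-periodic triangulated category over the finite field $k$ with $t>1$ odd. For all objects $Z,L,M$ of $\mathcal{C}$, $$\frac{|(M,L)_{Z[1]}|}{|\operatorname{Aut}L|}\cdot\Big(\prod_{i=1}^t\frac{|\operatorname{Hom}(M[i],L)|^{(-1)^i}}{|\operatorname{Hom}(L[i],L)|^{(-1)^i}}\Big)^{1/2}=\frac{|(Z,M)_{L}|}{|\operatorname{Aut}Z|}\cdot\Big(\prod_{i=1}^t\frac{|\operatorname{Hom}(Z[i],M)|^{(-1)^i}}{|\operatorname{Hom}(Z[i],Z)|^{(-1)^i}}\Big)^{1/2}.$$
   Context: $k$ is a finite field with $q$ elements. A $t$-periodic triangulated category is a $k$-additive triangulated category $\mathcal{C}$ with translation functor $T=[1]$ such that (1) $\operatorname{Hom}(X,Y)$ is a finite-dimensional $k$-vector space for all $X,Y$; (2) $\operatorname{End}X$ is a finite-dimensional local $k$-algebra for every indecomposable $X$; (3) $[1]^t=[t]\cong 1_{\mathcal{C}}$. For objects $X,Y,W$, $(X,Y)_W$ denotes the set of morphisms $f\in\operatorname{Hom}(X,Y)$ whose mapping cone $\operatorname{Cone}(f)$ is isomorphic to $W$. $|S|$ denotes the cardinality of a finite set $S$. *)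

(* Defs.v *)
From HB Require Import structures.
From mathcomp Require Import all_boot all_order all_algebra all_field.
From mathcomp Require Import boolp.

Set Implicit Arguments.
Unset Strict Implicit.
Unset Printing Implicit Defensive.

Import Order.TTheory GRing.Theory Num.Theory.
Local Open Scope ring_scope.

Record preTri (k : finFieldType) := PreTri {
  obj : Type;
  hom : obj -> obj -> vectType k;
  comp : forall X Y Z : obj, hom Y Z -> hom X Y -> hom X Z;  (* comp g f = g o f *)
  idm : forall X : obj, hom X X;
  shift : obj -> obj;
  shiftm : forall X Y : obj, hom X Y -> hom (shift X) (shift Y);
  dist : forall X Y Z : obj,
      hom X Y -> hom Y Z -> hom Z (shift X) -> Prop          (* distinguished triangles *)
}.

Arguments comp {k} _ {X Y Z} g f.
Arguments idm {k} _ X.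
Arguments shift {k} _ X.
Arguments shiftm {k} _ {X Y} f.
Arguments dist {k} _ {X Y Z} f g h.
Arguments hom {k} _ X Y.
Arguments obj {k} _.

Section TriDefs.
Variables (k : finFieldType) (C : preTri k).

Local Notation hom := (hom C).
Local Notation comp := (comp C).
Local Notation idm := (idm C).
Local Notation shift := (shift C).
Local Notation shiftm := (shiftm C).
Local Notation dist := (dist C).

Definition cat_axioms : Prop :=
  (forall X Y Z W (h : hom Z W) (g : hom Y Z) (f : hom X Y),
      comp h (comp g f) = comp (comp h g) f) /\
  (forall X Y (f : hom X Y), comp (idm Y) f = f) /\
  (forall X Y (f : hom X Y), comp f (idm X) = f) /\
  (forall X Y Z (a : k) (g1 g2 : hom Y Z) (f : hom X Y),
      comp (a *: g1 + g2) f = a *: comp g1 f + comp g2 f) /\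
  (forall X Y Z (a : k) (g : hom Y Z) (f1 f2 : hom X Y),
      comp g (a *: f1 + f2) = a *: comp g f1 + comp g f2).

Definition is_iso X Y (f : hom X Y) : Prop :=
  exists g : hom Y X, comp g f = idm X /\ comp f g = idm Y.

Definition iso_obj X Y : Prop := exists f : hom X Y, is_iso f.

Definition is_zero X : Prop := idm X = 0.

Definition is_biprod X A B (i1 : hom A X) (i2 : hom B X)
    (p1 : hom X A) (p2 : hom X B) : Prop :=
  [/\ comp p1 i1 = idm A, comp p2 i2 = idm B, comp p1 i2 = 0,
      comp p2 i1 = 0 & comp i1 p1 + comp i2 p2 = idm X].

Definition additive_axioms : Prop :=
  (exists Z, is_zero Z) /\
  (forall A B, exists X (i1 : hom A X) (i2 : hom B X) (p1 : hom X A) (p2 : hom X B),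
      is_biprod i1 i2 p1 p2).

Definition shift_axioms : Prop :=
  (forall X Y (a : k) (f g : hom X Y), shiftm (a *: f + g) = a *: shiftm f + shiftm g) /\
  (forall X Y Z (g : hom Y Z) (f : hom X Y), shiftm (comp g f) = comp (shiftm g) (shiftm f)) /\
  (forall X, shiftm (idm X) = idm (shift X)) /\
  (forall X Y, bijective (@Defs.shiftm k C X Y)) /\
  (forall Y, exists X, iso_obj (shift X) Y).

Definition TR1 : Prop :=
  (forall X Y Z X' Y' Z' (f : hom X Y) (g : hom Y Z) (h : hom Z (shift X))
      (f' : hom X' Y') (g' : hom Y' Z') (h' : hom Z' (shift X'))
      (u : hom X X') (v : hom Y Y') (w : hom Z Z'),
      is_iso u -> is_iso v -> is_iso w ->
      comp v f = comp f' u -> comp w g = comp g' v ->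
      comp (shiftm u) h = comp h' w ->
      dist f g h -> dist f' g' h') /\
  (forall X Z, is_zero Z -> dist (idm X) (0 : hom X Z) (0 : hom Z (shift X))) /\
  (forall X Y (f : hom X Y), exists Z (g : hom Y Z) (h : hom Z (shift X)), dist f g h).

Definition TR2 : Prop :=
  forall X Y Z (f : hom X Y) (g : hom Y Z) (h : hom Z (shift X)),
    dist f g h <-> dist g h (- shiftm f).

Definition TR3 : Prop :=
  forall X Y Z X' Y' Z' (f : hom X Y) (g : hom Y Z) (h : hom Z (shift X))
      (f' : hom X' Y') (g' : hom Y' Z') (h' : hom Z' (shift X'))
      (u : hom X X') (v : hom Y Y'),
    dist f g h -> dist f' g' h' -> comp v f = comp f' u ->
    exists w : hom Z Z', comp w g = comp g' v /\ comp (shiftm u) h = comp h' w.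

Definition TR4 : Prop :=
  forall X Y Z Z' X' Y' (f : hom X Y) (g : hom Y Z)
      (f2 : hom Y Z') (f3 : hom Z' (shift X))
      (g2 : hom Z X') (g3 : hom X' (shift Y))
      (h2 : hom Z Y') (h3 : hom Y' (shift X)),
    dist f f2 f3 -> dist g g2 g3 -> dist (comp g f) h2 h3 ->
    exists (u : hom Z' Y') (v : hom Y' X'),
      [/\ dist u v (comp (shiftm f2) g3),
          comp u f2 = comp h2 g, comp h3 u = f3,
          comp v h2 = g2 & comp g3 v = comp (shiftm f) h3].

Fixpoint shiftn (n : nat) (X : obj C) : obj C :=
  if n is n'.+1 then shift (shiftn n' X) else X.

Fixpoint shiftnm (n : nat) (X Y : obj C) (f : hom X Y) : hom (shiftn n X) (shiftn n Y) :=
  if n is n'.+1 then shiftm (shiftnm n' f) else f.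

Definition periodic (t : nat) : Prop :=
  exists eta : forall X, hom (shiftn t X) X,
    (forall X, is_iso (eta X)) /\
    (forall X Y (f : hom X Y), comp (eta Y) (shiftnm t f) = comp f (eta X)).

Definition indecomposable X : Prop :=
  ~ is_zero X /\
  forall A B (i1 : hom A X) (i2 : hom B X) (p1 : hom X A) (p2 : hom X B),
    is_biprod i1 i2 p1 p2 -> is_zero A \/ is_zero B.

Definition local_End X : Prop :=
  idm X <> 0 /\ forall a : hom X X, is_iso a \/ is_iso (idm X - a).

Definition periodic_tricat (t : nat) : Prop :=
  [/\ cat_axioms /\ additive_axioms, shift_axioms, TR1 /\ TR2,
      TR3 /\ TR4 & (forall X, indecomposable X -> local_End X) /\ periodic t].

Definition card_hom X Y : nat := #|{: finvect_type (hom X Y)}|.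

(* (X,Y)_W : morphisms f : X -> Y with Cone(f) isomorphic to W, i.e. fitting
   in a distinguished triangle X -f-> Y -> W -> X[1] *)
Definition cone_set X Y W : {set finvect_type (hom X Y)} :=
  [set f : finvect_type (hom X Y) |
     `[< exists (g : hom Y W) (h : hom W (shift X)), dist f g h >] ].

Definition aut_set X : {set finvect_type (hom X X)} :=
  [set f : finvect_type (hom X X) | `[< is_iso f >] ].

End TriDefs.

(* Main.v *)
Require Import Defs.
From HB Require Import structures.
From mathcomp Require Import all_boot all_order all_algebra all_field.
From mathcomp Require Import boolp.
From mathcomp Require Import ring.
Import Order.TTheory GRing.Theory Num.Theory.
Local Open Scope ring_scope.

Module Aux.
Set Implicit Arguments.
Unset Strict Implicit.
Unset Printing Implicit Defensive.
Set Default Proof Using "All".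


Section Basic.
Variables (k : finFieldType) (C : preTri k).
Local Notation hom := (@Defs.hom k C).
Local Notation cmp := (@Defs.comp k C _ _ _).
Local Notation sh := (@Defs.shift k C).
Local Notation shm := (@Defs.shiftm k C _ _).
Local Notation idm := (@Defs.idm k C).

Hypothesis Hcat : cat_axioms C.

Lemma cmpDl X Y Z (g1 g2 : hom Y Z) (f : hom X Y) : cmp (g1 + g2) f = cmp g1 f + cmp g2 f.
Proof. case: Hcat => _ [_ [_ [H _]]]. by have := H X Y Z 1 g1 g2 f; rewrite !scale1r. Qed.
Lemma cmpDr X Y Z (g : hom Y Z) (f1 f2 : hom X Y) : cmp g (f1 + f2) = cmp g f1 + cmp g f2.
Proof. case: Hcat => _ [_ [_ [_ H]]]. by have := H X Y Z 1 g f1 f2; rewrite !scale1r. Qed.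
Lemma cmp0l X Y Z (f : hom X Y) : cmp (0 : hom Y Z) f = 0.
Proof. case: Hcat => _ [_ [_ [H _]]]. have := H X Y Z 1 0 0 f.
rewrite scaler0 addr0 scale1r => E; apply: (addIr (cmp _ _)); rewrite add0r; exact: esym E. Qed.
Lemma cmp0r X Y Z (g : hom Y Z) : cmp g (0 : hom X Y) = 0.
Proof. case: Hcat => _ [_ [_ [_ H]]]. have := H X Y Z 1 g 0 0.
rewrite scaler0 addr0 scale1r => E; apply: (addIr (cmp _ _)); rewrite add0r; exact: esym E. Qed.
Lemma cmpZl X Y Z a (g : hom Y Z) (f : hom X Y) : cmp (a *: g) f = a *: cmp g f.
Proof. case: Hcat => _ [_ [_ [H _]]]. by have := H X Y Z a g 0 f; rewrite !addr0 cmp0l addr0. Qed.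
Lemma cmpZr X Y Z a (g : hom Y Z) (f : hom X Y) : cmp g (a *: f) = a *: cmp g f.
Proof. case: Hcat => _ [_ [_ [_ H]]]. by have := H X Y Z a g f 0; rewrite !addr0 cmp0r addr0. Qed.
Lemma cmpNl X Y Z (g : hom Y Z) (f : hom X Y) : cmp (- g) f = - cmp g f.
Proof. by rewrite -scaleN1r cmpZl scaleN1r. Qed.
Lemma cmpNr X Y Z (g : hom Y Z) (f : hom X Y) : cmp g (- f) = - cmp g f.
Proof. by rewrite -scaleN1r cmpZr scaleN1r. Qed.
Lemma cmpBl X Y Z (g1 g2 : hom Y Z) (f : hom X Y) : cmp (g1 - g2) f = cmp g1 f - cmp g2 f.
Proof. by rewrite cmpDl cmpNl. Qed.
Lemma cmpBr X Y Z (g : hom Y Z) (f1 f2 : hom X Y) : cmp g (f1 - f2) = cmp g f1 - cmp g f2.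
Proof. by rewrite cmpDr cmpNr. Qed.
Lemma cmpA X Y Z W (h : hom Z W) (g : hom Y Z) (f : hom X Y) : cmp h (cmp g f) = cmp (cmp h g) f.
Proof. by case: Hcat => H _; rewrite H. Qed.
Lemma cmp1l X Y (f : hom X Y) : cmp (idm Y) f = f.
Proof. by case: Hcat => _ [H _]. Qed.
Lemma cmp1r X Y (f : hom X Y) : cmp f (idm X) = f.
Proof. by case: Hcat => _ [_ [H _]]. Qed.

End Basic.


Section Tri.
Variables (k : finFieldType) (C : preTri k).
Local Notation hom := (@Defs.hom k C).
Local Notation cmp := (@Defs.comp k C _ _ _).
Local Notation sh := (@Defs.shift k C).
Local Notation shm := (@Defs.shiftm k C _ _).
Local Notation idm := (@Defs.idm k C).
Local Notation dist := (@Defs.dist k C _ _ _).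

Hypothesis Hcat : cat_axioms C.
Hypothesis Hadd : additive_axioms C.
Hypothesis Hsh : shift_axioms C.
Hypothesis H1 : TR1 C.
Hypothesis H2 : TR2 C.
Hypothesis H3 : TR3 C.

Lemma shmDZ X Y a (f g : hom X Y) : shm (a *: f + g) = a *: shm f + shm g.
Proof. by case: Hsh => H _; rewrite H. Qed.
Lemma shm0 X Y : shm (0 : hom X Y) = 0.
Proof. have := @shmDZ X Y 1 0 0; rewrite scaler0 addr0 scale1r => E.
by apply: (addIr (shm (0 : hom X Y))); rewrite add0r; exact: esym E. Qed.
Lemma shmZ X Y a (f : hom X Y) : shm (a *: f) = a *: shm f.
Proof. by have := shmDZ a f 0; rewrite !addr0 shm0 addr0. Qed.
Lemma shmN X Y (f : hom X Y) : shm (- f) = - shm f.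
Proof. by rewrite -scaleN1r shmZ scaleN1r. Qed.
Lemma shmD X Y (f g : hom X Y) : shm (f + g) = shm f + shm g.
Proof. by have := shmDZ 1 f g; rewrite !scale1r. Qed.
Lemma shm_comp X Y Z (g : hom Y Z) (f : hom X Y) : shm (cmp g f) = cmp (shm g) (shm f).
Proof. by case: Hsh => _ [H _]; rewrite H. Qed.
Lemma shm_id X : shm (idm X) = idm (sh X).
Proof. by case: Hsh => _ [_ [H _]]; rewrite H. Qed.
Lemma shm_bij X Y : bijective (@Defs.shiftm k C X Y).
Proof. by case: Hsh => _ [_ [_ [H _]]]. Qed.
Lemma shm_inj X Y : injective (@Defs.shiftm k C X Y).
Proof. exact: bij_inj (shm_bij X Y). Qed.
Lemma shm_surj X Y (g : hom (sh X) (sh Y)) : exists f, g = shm f.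
Proof. case: (shm_bij X Y) => s _ sK. by exists (s g); rewrite sK. Qed.
Lemma shm_ess Y : exists X, iso_obj (sh X) Y.
Proof. by case: Hsh => _ [_ [_ [_ H]]]. Qed.

Lemma zero_obj : exists Z0 : obj C, is_zero Z0.
Proof. by case: Hadd => [[Z0 H] _]; exists Z0. Qed.
Lemma zero_from (Z0 X : obj C) (z : is_zero Z0) (f : hom Z0 X) : f = 0.
Proof. by rewrite -(cmp1r Hcat f) z cmp0r. Qed.
Lemma zero_to (Z0 X : obj C) (z : is_zero Z0) (f : hom X Z0) : f = 0.
Proof. by rewrite -(cmp1l Hcat f) z cmp0l. Qed.

Lemma triv_tri (X Z0 : obj C) : is_zero Z0 -> dist (idm X) (0 : hom X Z0) (0 : hom Z0 (sh X)).
Proof. by case: H1 => _ [H _]; apply: H. Qed.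

Lemma tr3 X Y Z X' Y' Z' (f : hom X Y) (g : hom Y Z) (h : hom Z (sh X))
  (f' : hom X' Y') (g' : hom Y' Z') (h' : hom Z' (sh X')) (u : hom X X') (v : hom Y Y') :
  dist f g h -> dist f' g' h' -> cmp v f = cmp f' u ->
  exists w : hom Z Z', cmp w g = cmp g' v /\ cmp (shm u) h = cmp h' w.
Proof. exact: H3. Qed.
Lemma tr2 X Y Z (f : hom X Y) (g : hom Y Z) (h : hom Z (sh X)) :
  dist f g h -> dist g h (- shm f).
Proof. exact: (proj1 (H2 f g h)). Qed.
Lemma tr2' X Y Z (f : hom X Y) (g : hom Y Z) (h : hom Z (sh X)) :
  dist g h (- shm f) -> dist f g h.
Proof. exact: (proj2 (H2 f g h)). Qed.

Lemma tri_gf X Y Z (f : hom X Y) (g : hom Y Z) (h : hom Z (sh X)) :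
  dist f g h -> cmp g f = 0.
Proof.
move=> D; have [Z0 z0] := zero_obj.
have [w [Hw _]] := tr3 (triv_tri X z0) D (erefl (cmp f (idm X))).
by rewrite -Hw (cmp0r Hcat).
Qed.

Lemma tri_hg X Y Z (f : hom X Y) (g : hom Y Z) (h : hom Z (sh X)) :
  dist f g h -> cmp h g = 0.
Proof. by move=> /tr2 /tri_gf. Qed.

Lemma tri_fh X Y Z (f : hom X Y) (g : hom Y Z) (h : hom Z (sh X)) :
  dist f g h -> cmp (shm f) h = 0.
Proof. move=> /tr2 /tr2 /tri_gf; rewrite (cmpNl Hcat) => /eqP; by rewrite oppr_eq0 => /eqP. Qed.

Lemma exact_cov X Y Z (f : hom X Y) (g : hom Y Z) (h : hom Z (sh X)) :
  dist f g h -> forall W (a : hom W Y), cmp g a = 0 -> exists b, a = cmp f b.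
Proof.
move=> D W a ga; have [Z0 z0] := zero_obj.
have D0 := tr2 (triv_tri W z0).
have D' := tr2 D.
have E : cmp (0 : hom Z0 Z) (0 : hom W Z0) = cmp g a by rewrite (cmp0l Hcat) ga.
have [w [_ Hw]] := tr3 D0 D' E.
have [b Eb] := shm_surj w; rewrite Eb in Hw.
exists b; apply: shm_inj.
move: Hw; rewrite (cmpNr Hcat) (cmpNl Hcat) shm_id (cmp1r Hcat) => /eqP; rewrite eqr_opp => /eqP ->.
by rewrite shm_comp.
Qed.

Lemma exact_con X Y Z (f : hom X Y) (g : hom Y Z) (h : hom Z (sh X)) :
  dist f g h -> forall W (a : hom Y W), cmp a f = 0 -> exists b, a = cmp b g.
Proof.
move=> D W a af; have [Z0 z0] := zero_obj.
have [V [phi [psi [E1 E2]]]] := shm_ess W.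
have D0 := tr2 (tr2 (triv_tri V z0)).
have E : cmp (cmp psi a) f = cmp (0 : hom Z0 (sh V)) (0 : hom X Z0).
  by rewrite -(cmpA Hcat) af (cmp0r Hcat) (cmp0l Hcat).
have [w [Hw _]] := tr3 D D0 E.
exists (- cmp phi w).
rewrite (cmpNl Hcat) -(cmpA Hcat) Hw (cmpNl Hcat) shm_id (cmp1l Hcat) (cmpNr Hcat) (cmpA Hcat) E2 (cmp1l Hcat).
by rewrite opprK.
Qed.

End Tri.


Lemma card_bij_in (T1 T2 : finType) (A : {set T1}) (B : {set T2}) (f : T1 -> T2) (g : T2 -> T1) :
  {in A, forall x, f x \in B} -> {in B, forall y, g y \in A} ->
  {in A, cancel f g} -> {in B, cancel g f} -> #|A| = #|B|.
Proof.
move=> fAB gBA fK gK.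
have <- : [set f x | x in A] = B.
  apply/setP => y; apply/imsetP/idP => [[x xA ->]|yB]; first exact: fAB.
  by exists (g y); [exact: gBA | rewrite gK].
rewrite card_in_imset // => x y xA yA E.
by rewrite -(fK x xA) E fK.
Qed.

Lemma rank_nullity (U V : finZmodType) (phi : U -> V)
  (phiB : forall x y, phi (x - y) = phi x - phi y) (A : {set U}) :
  0 \in A -> (forall x y, x \in A -> y \in A -> x - y \in A) ->
  #|A| = muln #|[set x in A | phi x == 0]| #|[set phi x | x in A]|.
Proof.
move=> A0 AB.
have -> : #|A| = (\sum_(v in [set phi x | x in A]) #|[set x in A | phi x == v]|)%N.
  rewrite -sum1_card (partition_big phi (mem [set phi x | x in A])) /=; last first.
    by move=> x xA; apply/imsetP; exists x.
  apply: eq_bigr => v _; rewrite -sum1_card; apply: eq_bigl => x.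
  by rewrite inE.
rewrite mulnC -sum_nat_const; apply: eq_bigr => v /imsetP [x0 x0A ->].
have phi0 : phi 0 = 0 by rewrite -(subrr 0) phiB subrr.
have phiN : forall x, phi (- x) = - phi x by move=> x; rewrite -sub0r phiB phi0 sub0r.
have Nx0 : - x0 \in A by rewrite -sub0r AB.
apply: (@card_bij_in _ _ _ _ (fun x => x - x0) (fun x => x + x0)).
- move=> x; rewrite !inE => /andP [xA /eqP E].
  by rewrite AB //= phiB E subrr eqxx.
- move=> x; rewrite !inE => /andP [xA /eqP E].
  have -> : x + x0 = x - (- x0) by rewrite opprK.
  by rewrite AB //= phiB phiN E opprK add0r eqxx.
- by move=> x _; rewrite /= subrK.
- by move=> x _; rewrite /= addrK.
Qed.




Section Orbit.
Variables (k : finFieldType) (C : preTri k).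
Local Notation hom := (@Defs.hom k C).
Local Notation fT X Y := (finvect_type (@Defs.hom k C X Y)).
Local Notation cmp := (@Defs.comp k C _ _ _).
Local Notation sh := (@Defs.shift k C).
Local Notation shm := (@Defs.shiftm k C _ _).
Local Notation idm := (@Defs.idm k C).
Local Notation dist := (@Defs.dist k C _ _ _).

Hypothesis Hcat : cat_axioms C.
Hypothesis Hadd : additive_axioms C.
Hypothesis Hsh : shift_axioms C.
Hypothesis H1 : TR1 C.
Hypothesis H2 : TR2 C.
Hypothesis H3 : TR3 C.

Local Notation cA := (cmpA Hcat).
Local Notation HH := (Hcat, Hadd, Hsh, H1, H2, H3).
Local Notation ecov := (exact_cov Hcat Hadd Hsh H1 H2 H3).
Local Notation econ := (exact_con Hcat Hadd Hsh H1 H2 H3).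
Local Notation rot := (tr2 Hcat Hadd Hsh H1 H2 H3).
Local Notation rot' := (tr2' Hcat Hadd Hsh H1 H2 H3).
Local Notation tgf := (tri_gf Hcat Hadd Hsh H1 H2 H3).
Local Notation thg := (tri_hg Hcat Hadd Hsh H1 H2 H3).
Local Notation tfh := (tri_fh Hcat Hadd Hsh H1 H2 H3).
Local Notation TR3' := (tr3 Hcat Hadd Hsh H1 H2 H3).
Local Notation c1l := (cmp1l Hcat).
Local Notation c1r := (cmp1r Hcat).
Local Notation c0l := (cmp0l Hcat).
Local Notation c0r := (cmp0r Hcat).
Local Notation cBl := (cmpBl Hcat).
Local Notation cBr := (cmpBr Hcat).
Local Notation cDl := (cmpDl Hcat).
Local Notation cDr := (cmpDr Hcat).
Local Notation cNl := (cmpNl Hcat).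
Local Notation cNr := (cmpNr Hcat).

Lemma iso_of_tri A B D (a : hom A B) (g g' : hom B D) (h h' : hom D (sh A)) (w : hom D D) :
  dist a g h -> dist a g' h' -> cmp w g = g' -> h = cmp h' w -> is_iso w.
Proof.
move=> Dt Dt' Eg Eh.
have Linj : injective (fun x : fT D D => cmp w x).
  move=> x y E; apply/eqP; rewrite -subr_eq0; apply/eqP.
  have wz : cmp w (x - y) = 0 by rewrite cBr E subrr.
  have hz : cmp h (x - y) = 0 by rewrite Eh -cA wz c0r.
  have [b Eb] := ecov (rot Dt) hz.
  have gb : cmp g' b = 0 by rewrite -Eg -cA -Eb.
  have [c Ec] := ecov Dt' gb.
  by rewrite Eb Ec cA (tgf Dt) c0l.
have Rinj : injective (fun x : fT D D => cmp x w).
  move=> x y E; apply/eqP; rewrite -subr_eq0; apply/eqP.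
  have zw : cmp (x - y) w = 0 by rewrite cBl E subrr.
  have zg : cmp (x - y) g' = 0 by rewrite -Eg cA zw c0l.
  have [b Eb] := econ (rot Dt') zg.
  have bh : cmp b h = 0 by rewrite Eh cA -Eb.
  have [c Ec] := econ (rot (rot Dt)) bh.
  by rewrite Eb Ec -cA (thg (rot Dt')) c0r.
have [Li LiK KLi] := injF_bij Linj.
have [Ri RiK KRi] := injF_bij Rinj.
have wx : cmp w (Li (idm D)) = idm D by exact: (KLi (idm D)).
have yw : cmp (Ri (idm D)) w = idm D by exact: (KRi (idm D)).
exists (Li (idm D)); split => //.
have <- : Ri (idm D) = Li (idm D); last exact: yw.
transitivity (cmp (Ri (idm D)) (cmp w (Li (idm D)))); first by rewrite wx c1r.
by rewrite cA yw c1l.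
Qed.

Lemma iso_comp X Y Z (g : hom Y Z) (f : hom X Y) : is_iso g -> is_iso f -> is_iso (cmp g f).
Proof.
move=> [g' [g1 g2]] [f' [f1 f2]]; exists (cmp f' g'); split.
  by rewrite cA -(cA f') g1 c1r.
by rewrite cA -(cA g) f2 c1r.
Qed.

Lemma in_aut X (f : fT X X) : (f \in aut_set X) = `[< is_iso f >].
Proof. by rewrite inE. Qed.

Definition Sset B D A' (g : hom B D) (h : hom D A') : {set fT D D} :=
  [set u : fT D D | (cmp u g == 0) && (cmp h u == 0)].

Lemma tr1iso X Y Z X' Y' Z' (f : hom X Y) (g : hom Y Z) (h : hom Z (sh X))
  (f' : hom X' Y') (g' : hom Y' Z') (h' : hom Z' (sh X')) (u : hom X X') (v : hom Y Y') (w : hom Z Z') :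
  is_iso u -> is_iso v -> is_iso w ->
  cmp v f = cmp f' u -> cmp w g = cmp g' v -> cmp (shm u) h = cmp h' w ->
  dist f g h -> dist f' g' h'.
Proof. by case: H1 => H _; apply: H. Qed.

Lemma iso_id X : is_iso (idm X).
Proof. by exists (idm X); rewrite c1l. Qed.

Lemma stab_card A B D (a : hom A B) (g0 : hom B D) (h0 : hom D (sh A)) (g : hom B D) (h : hom D (sh A)) :
  dist a g0 h0 -> dist a g h ->
  #|[set w in aut_set D | (cmp w g0 == g) && (cmp h w == h0)]| = #|Sset g h|.
Proof.
move=> D0 D1.
have [w0 [E1 E2]] := TR3' D0 D1 (etrans (c1l a) (esym (c1r a))).
rewrite c1r in E1; rewrite (shm_id Hcat Hadd Hsh H1 H2 H3) c1l in E2.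
have [w0' [F1 F2]] := iso_of_tri D0 D1 E1 E2.
have G1 : cmp w0' g = g0 by rewrite -E1 cA F1 c1l.
have G2 : cmp h0 w0' = h by rewrite E2 -cA F2 c1r.
transitivity #|[set v in aut_set D | (cmp v g == g) && (cmp h v == h)]|.
  apply: (@card_bij_in _ _ _ _ (fun w : fT D D => (cmp w w0' : fT D D)) (fun v : fT D D => (cmp v w0 : fT D D))).
  - move=> w; rewrite !inE => /andP [/asboolP iw /andP [/eqP Ew /eqP Eh]].
    apply/andP; split; first by apply/asboolP; apply: iso_comp => //; exists w0.
    by rewrite -cA G1 Ew cA Eh G2; apply/andP; split; apply/eqP.
  - move=> v; rewrite !inE => /andP [/asboolP iv /andP [/eqP Ev /eqP Eh]].
    apply/andP; split; first by apply/asboolP; apply: iso_comp => //; exists w0'.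
    by rewrite -cA E1 Ev cA Eh -E2; apply/andP; split; apply/eqP.
  - by move=> w _; rewrite -cA F1 c1r.
  - by move=> v _; rewrite -cA F2 c1r.
apply: (@card_bij_in _ _ _ _ (fun v : fT D D => v - idm D) (fun u : fT D D => u + idm D)).
- move=> v; rewrite !inE => /andP [_ /andP [/eqP Ev /eqP Eh]].
  by rewrite cBl cBr Ev Eh c1l c1r !subrr; apply/andP; split; apply/eqP.
- move=> u; rewrite !inE => /andP [/eqP Eu /eqP Eh].
  have [b Eb] := econ (rot D1) Eu.
  have uu : cmp u u = 0 by rewrite {1}Eb -cA Eh c0r.
  apply/andP; split.
    apply/asboolP; exists (idm D - u); split.
      by rewrite cBl cDr cDr uu !c1l !c1r add0r addrAC subrr add0r.
    by rewrite cDl cBr cBr uu !c1l !c1r subr0 addrC subrK.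
  by rewrite cDl cDr Eu Eh !c1l !c1r !add0r; apply/andP; split; apply/eqP.
- by move=> v _; rewrite subrK.
- by move=> u _; rewrite addrK.
Qed.

Lemma orbit_count A B D (a : hom A B) (g0 : hom B D) (h0 : hom D (sh A)) : dist a g0 h0 ->
  \sum_(p : (fT B D * fT D (sh A))%type | `[< dist a p.1 p.2 >]) #|Sset p.1 p.2| = #|aut_set D|.
Proof.
move=> D0.
transitivity (\sum_(p : (fT B D * fT D (sh A))%type | `[< dist a p.1 p.2 >])
   \sum_(w | (w \in aut_set D) && ((cmp w g0 == p.1) && (cmp p.2 w == h0))) 1%N).
  apply: eq_bigr => p /asboolP Dp; rewrite -(stab_card D0 Dp) -sum1_card.
  by apply: eq_bigl => w; rewrite inE.
rewrite (exchange_big_dep (fun w => w \in aut_set D)) /=; last by move=> p w _ /andP [].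
rewrite -sum1_card; apply: eq_bigr => w wA.
have [w' [F1 F2]] : is_iso w by move: wA; rewrite inE => /asboolP.
rewrite (big_pred1 ((cmp w g0 : fT B D), (cmp h0 w' : fT D (sh A)))) // => p /=.
apply/idP/idP.
- move=> /andP [_ /andP [_ /andP [/eqP E1 /eqP E2]]]; apply/eqP.
  case: p E1 E2 => x y /= E1 E2; congr (_, _); first by [].
  by rewrite -E2 -cA F2 c1r.
- move/eqP => -> /=; rewrite wA /=; apply/andP; split.
    apply/asboolP; apply: (tr1iso (u := idm A) (v := idm B) (w := w) _ _ _ _ _ _ D0).
    + exact: iso_id.
    + exact: iso_id.
    + by exists w'.
    + by rewrite c1l c1r.
    + by rewrite c1r.
    + by rewrite (shm_id Hcat Hadd Hsh H1 H2 H3) c1l -cA F1 c1r.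
  by apply/andP; split; apply/eqP; rewrite // -cA F1 c1r.
Qed.

End Orbit.


Section Count.
Variables (k : finFieldType) (C : preTri k).
Local Notation hom := (@Defs.hom k C).
Local Notation fT X Y := (finvect_type (@Defs.hom k C X Y)).
Local Notation cmp := (@Defs.comp k C _ _ _).
Local Notation sh := (@Defs.shift k C).
Local Notation shm := (@Defs.shiftm k C _ _).
Local Notation idm := (@Defs.idm k C).
Local Notation dist := (@Defs.dist k C _ _ _).

Hypothesis Hcat : cat_axioms C.
Hypothesis Hadd : additive_axioms C.
Hypothesis Hsh : shift_axioms C.
Hypothesis H1 : TR1 C.
Hypothesis H2 : TR2 C.
Hypothesis H3 : TR3 C.

Local Notation cA := (cmpA Hcat).
Local Notation c1l := (cmp1l Hcat).
Local Notation c1r := (cmp1r Hcat).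
Local Notation c0l := (cmp0l Hcat).
Local Notation c0r := (cmp0r Hcat).
Local Notation cBl := (cmpBl Hcat).
Local Notation cBr := (cmpBr Hcat).
Local Notation cDl := (cmpDl Hcat).
Local Notation cDr := (cmpDr Hcat).
Local Notation cNl := (cmpNl Hcat).
Local Notation cNr := (cmpNr Hcat).
Local Notation ecov := (exact_cov Hcat Hadd Hsh H1 H2 H3).
Local Notation econ := (exact_con Hcat Hadd Hsh H1 H2 H3).
Local Notation rot := (tr2 Hcat Hadd Hsh H1 H2 H3).
Local Notation tgf := (tri_gf Hcat Hadd Hsh H1 H2 H3).
Local Notation thg := (tri_hg Hcat Hadd Hsh H1 H2 H3).
Local Notation tfh := (tri_fh Hcat Hadd Hsh H1 H2 H3).

Definition cimg W X Y (x : hom X Y) : {set fT X W} := [set (cmp u x : fT X W) | u : fT Y W].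
Definition dimg W X Y (x : hom X Y) : {set fT W Y} := [set (cmp x u : fT W Y) | u : fT W X].

Lemma card_hom_setT (X Y : obj C) : card_hom X Y = #|[set: fT X Y]|.
Proof. by rewrite cardsT. Qed.

Lemma rn_pre W X Y (x : hom X Y) :
  card_hom Y W = muln #|[set u : fT Y W | cmp u x == 0]| #|cimg W x|.
Proof.
rewrite card_hom_setT (@rank_nullity _ _ (fun u : fT Y W => (cmp u x : fT X W))).
- congr muln; first by apply: eq_card => u; rewrite !inE.
  by apply: eq_card => v; apply/imsetP/imsetP => [[u _ ->]|[u _ ->]]; exists u.
- by move=> u v; rewrite cBl.
- by rewrite inE.
- by move=> *; rewrite inE.
Qed.

Lemma rn_post W X Y (x : hom X Y) :
  card_hom W X = muln #|[set u : fT W X | cmp x u == 0]| #|dimg W x|.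
Proof.
rewrite card_hom_setT (@rank_nullity _ _ (fun u : fT W X => (cmp x u : fT W Y))).
- congr muln; first by apply: eq_card => u; rewrite !inE.
  by apply: eq_card => v; apply/imsetP/imsetP => [[u _ ->]|[u _ ->]]; exists u.
- by move=> u v; rewrite cBr.
- by rewrite inE.
- by move=> *; rewrite inE.
Qed.

Lemma card_con W X Y Z (a : hom X Y) (b : hom Y Z) (c : hom Z (sh X)) :
  dist a b c -> card_hom Y W = muln #|cimg W b| #|cimg W a|.
Proof.
move=> Dt; rewrite (rn_pre W a); congr muln; apply: eq_card => u; rewrite inE.
apply/eqP/imsetP => [/(econ Dt) [v ->]|[v _ ->]]; first by exists v.
by rewrite -cA (tgf Dt) c0r.
Qed.

Lemma card_cov W X Y Z (a : hom X Y) (b : hom Y Z) (c : hom Z (sh X)) :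
  dist a b c -> card_hom W Y = muln #|dimg W a| #|dimg W b|.
Proof.
move=> Dt; rewrite (rn_post W b); congr muln; apply: eq_card => u; rewrite inE.
apply/eqP/imsetP => [/(ecov Dt) [v ->]|[v _ ->]]; first by exists v.
by rewrite cA (tgf Dt) c0l.
Qed.

Local Notation orbit := (orbit_count Hcat Hadd Hsh H1 H2 H3).

Lemma count_total A B D :
  \sum_(x : (fT A B * (fT B D * fT D (sh A)))%type | `[< dist x.1 x.2.1 x.2.2 >]) #|Sset x.2.1 x.2.2|
  = muln #|cone_set A B D| #|aut_set D|.
Proof.
transitivity (\sum_(a : fT A B) \sum_(p : (fT B D * fT D (sh A))%type | `[< dist a p.1 p.2 >])
   #|Sset p.1 p.2|).
  by rewrite pair_big_dep.
rewrite -sum_nat_const [in RHS]big_mkcond /=; apply: eq_bigr => a _.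
rewrite inE; case: asboolP => [[g0 [h0 D0]]|aC]; first exact: (orbit D0).
rewrite big_pred0 // => p; apply/asboolP => Dp; apply: aC.
by exists p.1, p.2.
Qed.

Definition Aset Z L (h : hom L (sh Z)) : {set fT (sh Z) L} :=
  [set u : fT (sh Z) L | cmp h (cmp u h) == 0].

Lemma P1 Z M L (f : hom Z M) (g : hom M L) (h : hom L (sh Z)) : dist f g h ->
  muln #|Sset g h| (card_hom (sh Z) L) = muln #|Aset h| #|cimg L h|.
Proof.
move=> Dt; rewrite (rn_pre L h) (@rank_nullity _ _ (fun u : fT (sh Z) L => (cmp u h : fT L L)) _ (Aset h)).
- have -> : [set x in Aset h | (cmp x h : fT L L) == 0] = [set u : fT (sh Z) L | cmp u h == 0].
    apply/setP => u; rewrite !inE; case: (cmp u h =P 0) => [->|]; last by rewrite andbF.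
    by rewrite c0r eqxx.
  have -> : [set (cmp x h : fT L L) | x : fT (sh Z) L in Aset h] = Sset g h.
    apply/setP => u; rewrite !inE; apply/imsetP/andP => [[x]|[/eqP ug /eqP hu]].
      rewrite inE => /eqP hx ->; split; apply/eqP; rewrite // -cA (thg Dt) c0r //.
    have [b Eb] := econ (rot Dt) ug; exists b => //.
    by rewrite inE -Eb hu.
  by rewrite mulnA [muln #|Sset g h| _]mulnC.
- by move=> u v; rewrite cBl.
- by rewrite inE c0l c0r.
- move=> u v; rewrite !inE => /eqP hu /eqP hv; by rewrite cBl cBr hu hv subrr.
Qed.

Lemma P2 Z M L (f : hom Z M) (g : hom M L) (h : hom L (sh Z)) : dist f g h ->
  muln #|Sset h (- shm f)| (card_hom (sh Z) L) = muln #|Aset h| #|dimg (sh Z) h|.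
Proof.
move=> Dt; rewrite (rn_post (sh Z) h) (@rank_nullity _ _ (fun u : fT (sh Z) L => (cmp h u : fT (sh Z) (sh Z))) _ (Aset h)).
- have -> : [set x : fT (sh Z) L in Aset h | (cmp h x : fT (sh Z) (sh Z)) == 0] = [set u : fT (sh Z) L | cmp h u == 0].
    apply/setP => u; rewrite !inE; case: (cmp h u =P 0) => [E|]; last by rewrite andbF.
    by rewrite cA E c0l eqxx.
  have -> : [set (cmp h x : fT (sh Z) (sh Z)) | x : fT (sh Z) L in Aset h] = Sset h (- shm f).
    apply/setP => u; rewrite !inE; apply/imsetP/andP => [[x]|[/eqP uh /eqP fu]].
      rewrite inE => /eqP hx ->; split; apply/eqP; first by rewrite -cA.
      by rewrite cA cNl (tfh Dt) oppr0 c0l.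
    have [b Eb] := ecov (rot (rot Dt)) fu; exists b => //.
    by rewrite inE cA -Eb uh.
  by rewrite mulnA [muln #|Sset _ _| _]mulnC.
- by move=> u v; rewrite cBr.
- by rewrite inE c0l c0r.
- move=> u v; rewrite !inE => /eqP hu /eqP hv; by rewrite cBl cBr hu hv subrr.
Qed.

End Count.


Section Iso.
Variables (k : finFieldType) (C : preTri k).
Local Notation hom := (@Defs.hom k C).
Local Notation fT X Y := (finvect_type (@Defs.hom k C X Y)).
Local Notation cmp := (@Defs.comp k C _ _ _).
Local Notation sh := (@Defs.shift k C).
Local Notation shm := (@Defs.shiftm k C _ _).
Local Notation idm := (@Defs.idm k C).
Local Notation dist := (@Defs.dist k C _ _ _).

Hypothesis Hcat : cat_axioms C.
Hypothesis Hadd : additive_axioms C.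
Hypothesis Hsh : shift_axioms C.
Hypothesis H1 : TR1 C.
Hypothesis H2 : TR2 C.
Hypothesis H3 : TR3 C.

Local Notation cA := (cmpA Hcat).
Local Notation c1l := (cmp1l Hcat).
Local Notation c1r := (cmp1r Hcat).
Local Notation c0l := (cmp0l Hcat).
Local Notation c0r := (cmp0r Hcat).
Local Notation cBl := (cmpBl Hcat).
Local Notation cBr := (cmpBr Hcat).
Local Notation cDl := (cmpDl Hcat).
Local Notation cDr := (cmpDr Hcat).
Local Notation cNl := (cmpNl Hcat).
Local Notation cNr := (cmpNr Hcat).
Local Notation ecov := (exact_cov Hcat Hadd Hsh H1 H2 H3).
Local Notation econ := (exact_con Hcat Hadd Hsh H1 H2 H3).
Local Notation rot := (tr2 Hcat Hadd Hsh H1 H2 H3).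
Local Notation tgf := (tri_gf Hcat Hadd Hsh H1 H2 H3).
Local Notation thg := (tri_hg Hcat Hadd Hsh H1 H2 H3).
Local Notation tfh := (tri_fh Hcat Hadd Hsh H1 H2 H3).
Local Notation shid := (shm_id Hcat Hadd Hsh H1 H2 H3).
Local Notation shcomp := (shm_comp Hcat Hadd Hsh H1 H2 H3).
Local Notation shN := (shmN Hcat Hadd Hsh H1 H2 H3).
Local Notation shZ := (shmZ Hcat Hadd Hsh H1 H2 H3).

Lemma isoN X Y (x : hom X Y) : is_iso x -> is_iso (- x).
Proof. move=> [y [E1 E2]]; exists (- y); by rewrite cNl cNr opprK E1 cNl cNr opprK E2. Qed.

Lemma iso_shm X Y (x : hom X Y) : is_iso x -> is_iso (shm x).
Proof. move=> [y [E1 E2]]; exists (shm y); by rewrite -!shcomp E1 E2 !shid. Qed.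

Lemma cimg_iso W A B A' B' (x : hom A B) (x' : hom A' B') (p : hom A' A) (q : hom B' B) :
  is_iso p -> is_iso q -> cmp q x' = cmp x p -> #|cimg W x'| = #|cimg W x|.
Proof.
move=> [p' [P1 P2]] [q' [Q1 Q2]] E.
have E' : cmp x' p' = cmp q' x.
  transitivity (cmp (cmp q' (cmp q x')) p'); first by rewrite cA Q1 c1l.
  by rewrite E -cA -cA P2 c1r.
apply: (@card_bij_in _ _ _ _ (fun v : fT A' W => (cmp v p' : fT A W)) (fun v : fT A W => (cmp v p : fT A' W))).
- move=> v /imsetP [u _ ->]; apply/imsetP; exists (cmp u q' : fT B W) => //.
  by rewrite -!cA E'.
- move=> v /imsetP [u _ ->]; apply/imsetP; exists (cmp u q : fT B' W) => //.
  by rewrite -!cA E.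
- by move=> v _; rewrite -cA P1 c1r.
- by move=> v _; rewrite -cA P2 c1r.
Qed.

Lemma dimg_iso W A B A' B' (x : hom A B) (x' : hom A' B') (p : hom A' A) (q : hom B' B) :
  is_iso p -> is_iso q -> cmp q x' = cmp x p -> #|dimg W x'| = #|dimg W x|.
Proof.
move=> [p' [P1 P2]] [q' [Q1 Q2]] E.
have E' : cmp q' x = cmp x' p'.
  transitivity (cmp q' (cmp (cmp x p) p')); first by rewrite -cA P2 c1r.
  by rewrite -E cA cA Q1 c1l.
apply: (@card_bij_in _ _ _ _ (fun v : fT W B' => (cmp q v : fT W B)) (fun v : fT W B => (cmp q' v : fT W B'))).
- move=> v /imsetP [u _ ->]; apply/imsetP; exists (cmp p u : fT W A) => //.
  by rewrite !cA E.
- move=> v /imsetP [u _ ->]; apply/imsetP; exists (cmp p' u : fT W A') => //.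
  by rewrite !cA E'.
- by move=> v _; rewrite cA Q1 c1l.
- by move=> v _; rewrite cA Q2 c1l.
Qed.

Lemma card_homL X X' Y (p : hom X' X) : is_iso p -> card_hom X Y = card_hom X' Y.
Proof.
move=> [p' [P1 P2]]; rewrite !(card_hom_setT Hcat Hadd Hsh H1 H2 H3).
apply: (@card_bij_in _ _ _ _ (fun v : fT X Y => (cmp v p : fT X' Y)) (fun v : fT X' Y => (cmp v p' : fT X Y))).
- by move=> *; rewrite inE.
- by move=> *; rewrite inE.
- by move=> v _; rewrite -cA P2 c1r.
- by move=> v _; rewrite -cA P1 c1r.
Qed.

Lemma card_homR X Y Y' (q : hom Y Y') : is_iso q -> card_hom X Y = card_hom X Y'.
Proof.
move=> [q' [Q1 Q2]]; rewrite !(card_hom_setT Hcat Hadd Hsh H1 H2 H3).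
apply: (@card_bij_in _ _ _ _ (fun v : fT X Y => (cmp q v : fT X Y')) (fun v : fT X Y' => (cmp q' v : fT X Y))).
- by move=> *; rewrite inE.
- by move=> *; rewrite inE.
- by move=> v _; rewrite cA Q1 c1l.
- by move=> v _; rewrite cA Q2 c1l.
Qed.

Lemma card_hom_sh X Y : card_hom (sh X) (sh Y) = card_hom X Y.
Proof.
rewrite !(card_hom_setT Hcat Hadd Hsh H1 H2 H3); apply/esym.
have [s sK Ks] := shm_bij Hcat Hadd Hsh H1 H2 H3 X Y.
apply: (@card_bij_in _ _ _ _ (fun v : fT X Y => (shm v : fT (sh X) (sh Y)))
   (fun v : fT (sh X) (sh Y) => (s v : fT X Y))).
- by move=> *; rewrite inE.
- by move=> *; rewrite inE.
- by move=> v _ /=; rewrite sK.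
- by move=> v _ /=; rewrite Ks.
Qed.

End Iso.


Section Family.
Variables (k : finFieldType) (C : preTri k).
Local Notation hom := (@Defs.hom k C).
Local Notation fT X Y := (finvect_type (@Defs.hom k C X Y)).
Local Notation cmp := (@Defs.comp k C _ _ _).
Local Notation sh := (@Defs.shift k C).
Local Notation shm := (@Defs.shiftm k C _ _).
Local Notation idm := (@Defs.idm k C).
Local Notation dist := (@Defs.dist k C _ _ _).

Hypothesis Hcat : cat_axioms C.
Hypothesis Hadd : additive_axioms C.
Hypothesis Hsh : shift_axioms C.
Hypothesis H1 : TR1 C.
Hypothesis H2 : TR2 C.
Hypothesis H3 : TR3 C.

Local Notation cA := (cmpA Hcat).
Local Notation c1l := (cmp1l Hcat).
Local Notation c1r := (cmp1r Hcat).
Local Notation c0l := (cmp0l Hcat).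
Local Notation c0r := (cmp0r Hcat).
Local Notation cBl := (cmpBl Hcat).
Local Notation cBr := (cmpBr Hcat).
Local Notation cDl := (cmpDl Hcat).
Local Notation cDr := (cmpDr Hcat).
Local Notation cNl := (cmpNl Hcat).
Local Notation cNr := (cmpNr Hcat).
Local Notation ecov := (exact_cov Hcat Hadd Hsh H1 H2 H3).
Local Notation econ := (exact_con Hcat Hadd Hsh H1 H2 H3).
Local Notation rot := (tr2 Hcat Hadd Hsh H1 H2 H3).
Local Notation tgf := (tri_gf Hcat Hadd Hsh H1 H2 H3).
Local Notation thg := (tri_hg Hcat Hadd Hsh H1 H2 H3).
Local Notation tfh := (tri_fh Hcat Hadd Hsh H1 H2 H3).
Local Notation shid := (shm_id Hcat Hadd Hsh H1 H2 H3).
Local Notation shcomp := (shm_comp Hcat Hadd Hsh H1 H2 H3).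
Local Notation shN := (shmN Hcat Hadd Hsh H1 H2 H3).
Local Notation shZ := (shmZ Hcat Hadd Hsh H1 H2 H3).

Variables (t : nat) (Hper : periodic C t) (todd : odd t).
Variables (Z M L : obj C) (f : hom Z M) (g : hom M L) (h : hom L (sh Z)).
Hypothesis Dt : dist f g h.

Fixpoint fn n : hom (shiftn n Z) (shiftn n M) :=
  match n return hom (shiftn n Z) (shiftn n M) with 0 => f | n'.+1 => - shm (fn n') end.
Fixpoint gn n : hom (shiftn n M) (shiftn n L) :=
  match n return hom (shiftn n M) (shiftn n L) with 0 => g | n'.+1 => - shm (gn n') end.
Fixpoint hn n : hom (shiftn n L) (sh (shiftn n Z)) :=
  match n return hom (shiftn n L) (sh (shiftn n Z)) with 0 => h | n'.+1 => - shm (hn n') end.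

Lemma dist_n n : dist (fn n) (gn n) (hn n).
Proof. elim: n => [|n IH] //=; exact: rot (rot (rot IH)). Qed.

Definition rf n := #|cimg L (fn n)|.
Definition rg n := #|cimg L (gn n)|.
Definition rh n := #|cimg L (hn n)|.
Definition sf n := #|dimg (sh Z) (fn n)|.
Definition sg n := #|dimg (sh Z) (gn n)|.
Definition sh_ n := #|dimg (sh Z) (hn n)|.

Lemma con_M n : card_hom (shiftn n M) L = muln (rg n) (rf n).
Proof. exact: (card_con Hcat Hadd Hsh H1 H2 H3 L (dist_n n)). Qed.
Lemma con_L n : card_hom (shiftn n L) L = muln (rh n) (rg n).
Proof. exact: (card_con Hcat Hadd Hsh H1 H2 H3 L (rot (dist_n n))). Qed.
Lemma con_Z n : card_hom (shiftn n.+1 Z) L = muln (rf n.+1) (rh n).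
Proof. exact: (card_con Hcat Hadd Hsh H1 H2 H3 L (rot (rot (dist_n n)))). Qed.
Lemma cov_M n : card_hom (sh Z) (shiftn n M) = muln (sf n) (sg n).
Proof. exact: (card_cov Hcat Hadd Hsh H1 H2 H3 (sh Z) (dist_n n)). Qed.
Lemma cov_L n : card_hom (sh Z) (shiftn n L) = muln (sg n) (sh_ n).
Proof. exact: (card_cov Hcat Hadd Hsh H1 H2 H3 (sh Z) (rot (dist_n n))). Qed.
Lemma cov_Z n : card_hom (sh Z) (shiftn n.+1 Z) = muln (sh_ n) (sf n.+1).
Proof. exact: (card_cov Hcat Hadd Hsh H1 H2 H3 (sh Z) (rot (rot (dist_n n)))). Qed.

Lemma cimg_gt0 W X Y (x : hom X Y) : (0 < #|cimg W x|)%N.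
Proof. apply/card_gt0P; exists 0; apply/imsetP; exists 0 => //; by rewrite c0l. Qed.
Lemma dimg_gt0 W X Y (x : hom X Y) : (0 < #|dimg W x|)%N.
Proof. apply/card_gt0P; exists 0; apply/imsetP; exists 0 => //; by rewrite c0r. Qed.

Lemma fn_sign n : fn n = ((-1)^+n) *: shiftnm n f.
Proof.
elim: n => [|n IH] /=; first by rewrite expr0 scale1r.
by rewrite IH shZ exprS mulN1r scaleNr.
Qed.

Lemma fn_t1 : fn t.+1 = shm (shiftnm t f).
Proof.
have sgt : (-1)^+t = -1 :> k by rewrite -signr_odd todd expr1.
by rewrite /= fn_sign sgt scaleN1r shN opprK.
Qed.

Lemma per_eq : exists p : hom (sh (shiftn t Z)) (sh Z), exists q : hom (sh (shiftn t M)) (sh M),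
  [/\ is_iso p, is_iso q & cmp q (fn t.+1) = cmp (fn 1) p].
Proof.
have [eta [Ei En]] := Hper.
exists (shm (eta Z)), (- shm (eta M)); split.
- exact: (iso_shm Hcat Hadd Hsh H1 H2 H3 (Ei Z)).
- exact: (isoN Hcat Hadd Hsh H1 H2 H3 (iso_shm Hcat Hadd Hsh H1 H2 H3 (Ei M))).
by rewrite fn_t1 /= cNl cNl -!shcomp En.
Qed.

Lemma rf_per : rf t.+1 = rf 1.
Proof.
have [p [q [Ip Iq E]]] := per_eq.
exact: (cimg_iso Hcat Hadd Hsh H1 H2 H3 L Ip Iq E).
Qed.

Lemma sf_per : sf t.+1 = sf 1.
Proof.
have [p [q [Ip Iq E]]] := per_eq.
exact: (dimg_iso Hcat Hadd Hsh H1 H2 H3 (sh Z) Ip Iq E).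
Qed.

Lemma rh_per : rh t = rh 0.
Proof.
have [p [q [Ip Iq E]]] := per_eq.
have E1 := con_Z t; have E0 := con_Z 0.
rewrite /= -(card_homL Hcat Hadd Hsh H1 H2 H3 L Ip) E0 rf_per in E1.
apply/eqP; rewrite -(eqn_pmul2l (cimg_gt0 L (fn 1))); apply/eqP.
exact: esym E1.
Qed.

Lemma sh_per : sh_ t = sh_ 0.
Proof.
have [p [q [Ip Iq E]]] := per_eq.
have E1 := cov_Z t; have E0 := cov_Z 0.
rewrite /= (card_homR Hcat Hadd Hsh H1 H2 H3 (sh Z) Ip) E0 sf_per in E1.
apply/eqP; rewrite -(eqn_pmul2r (dimg_gt0 (sh Z) (fn 1))); apply/eqP.
exact: esym E1.
Qed.

End Family.


Section Alg.
Variable R : fieldType.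

Lemma Esgn (x : R) i : x ^ ((-1)^+i : int) = if odd i then x^-1 else x.
Proof. rewrite -signr_odd; case: (odd i); by [rewrite expr1 exprN1 | rewrite expr0 expr1z]. Qed.

Lemma tele (c : nat -> R) (cnz : forall i, c i != 0) n :
  \prod_(1 <= i < n.+2) (c i.-1 * c i) ^ ((-1)^+i : int) = (c 0)^-1 * (c n.+1) ^ ((-1)^+n.+1 : int).
Proof.
elim: n => [|n IH]; first by rewrite big_nat1 !Esgn /= invfM.
rewrite big_nat_recr //= IH !Esgn /=.
have := cnz 0; have := cnz n.+1; have := cnz n.+2.
case: (odd n) => /= H0 Hn1 Hn2; field; by rewrite ?H0 ?Hn1 ?Hn2.
Qed.

Lemma key_alg (t : nat) (todd : odd t) (a b c : nat -> R)
  (anz : forall i, a i != 0) (bnz : forall i, b i != 0) (cnz : forall i, c i != 0) :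
  \prod_(1 <= i < t.+1) (a i * b i) ^ ((-1)^+i : int) =
  (\prod_(1 <= i < t.+1) (b i * c i) ^ ((-1)^+i : int)) *
  (\prod_(1 <= i < t.+1) (c i.-1 * a i) ^ ((-1)^+i : int)) * (c 0 * c t).
Proof.
case: t todd => [//|t] todd.
have Hc := tele cnz t.
rewrite (eq_bigr (fun i => c i.-1 ^ ((-1)^+i : int) * c i ^ ((-1)^+i : int))) in Hc; last first.
  by move=> i _; rewrite expfzMl.
rewrite big_split /= Esgn todd in Hc.
under eq_bigr do rewrite expfzMl.
under [X in _ = X * _ * _]eq_bigr do rewrite expfzMl.
under [X in _ = _ * X * _]eq_bigr do rewrite expfzMl.
rewrite !big_split /=.
set A := \prod_(1 <= i < t.+2) a i ^ _.
set B := \prod_(1 <= i < t.+2) b i ^ _.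
set Cc := \prod_(1 <= i < t.+2) c i ^ _.
set Cp := \prod_(1 <= i < t.+2) c i.-1 ^ _.
fold Cc Cp in Hc.
rewrite [RHS](_ : _ = A * B * ((Cp * Cc) * (c 0 * c t.+1))); last by ring.
by rewrite Hc -invfM mulVf ?mulr1 // mulf_neq0.
Qed.

Lemma prod_rev (t : nat) (todd : odd t) (F : nat -> R) :
  \prod_(1 <= i < t.+1) F (t.+1 - i)%N ^ ((-1)^+i : int) = \prod_(1 <= i < t.+1) F i ^ ((-1)^+i : int).
Proof.
rewrite big_nat_rev /=; apply: eq_big_nat => i /andP [i1 it].
rewrite add1n subSS subKn; last by apply: ltnW.
congr (_ ^ _); rewrite -signr_odd -[in RHS]signr_odd; congr (_ ^+ _).
by rewrite oddB 1?ltnW //= todd /=; case: (odd i).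
Qed.

End Alg.


Section Per.
Variables (k : finFieldType) (C : preTri k).
Local Notation hom := (@Defs.hom k C).
Local Notation fT X Y := (finvect_type (@Defs.hom k C X Y)).
Local Notation cmp := (@Defs.comp k C _ _ _).
Local Notation sh := (@Defs.shift k C).
Local Notation shm := (@Defs.shiftm k C _ _).
Local Notation idm := (@Defs.idm k C).
Local Notation dist := (@Defs.dist k C _ _ _).

Hypothesis Hcat : cat_axioms C.
Hypothesis Hadd : additive_axioms C.
Hypothesis Hsh : shift_axioms C.
Hypothesis H1 : TR1 C.
Hypothesis H2 : TR2 C.
Hypothesis H3 : TR3 C.

Local Notation cA := (cmpA Hcat).
Local Notation c1l := (cmp1l Hcat).
Local Notation c1r := (cmp1r Hcat).
Local Notation c0l := (cmp0l Hcat).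
Local Notation c0r := (cmp0r Hcat).
Local Notation cBl := (cmpBl Hcat).
Local Notation cBr := (cmpBr Hcat).
Local Notation cDl := (cmpDl Hcat).
Local Notation cDr := (cmpDr Hcat).
Local Notation cNl := (cmpNl Hcat).
Local Notation cNr := (cmpNr Hcat).
Local Notation ecov := (exact_cov Hcat Hadd Hsh H1 H2 H3).
Local Notation econ := (exact_con Hcat Hadd Hsh H1 H2 H3).
Local Notation rot := (tr2 Hcat Hadd Hsh H1 H2 H3).
Local Notation tgf := (tri_gf Hcat Hadd Hsh H1 H2 H3).
Local Notation thg := (tri_hg Hcat Hadd Hsh H1 H2 H3).
Local Notation tfh := (tri_fh Hcat Hadd Hsh H1 H2 H3).
Variables (t : nat) (Hper : periodic C t).

Lemma shiftn_add a b (X : obj C) : shiftn a (shiftn b X) = shiftn (a + b) X.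
Proof. by elim: a => [|a IH] //=; rewrite IH. Qed.

Lemma card_hom_shn a (X Y : obj C) : card_hom (shiftn a X) (shiftn a Y) = card_hom X Y.
Proof. elim: a => [|a IH] //=; by rewrite (card_hom_sh Hcat Hadd Hsh H1 H2 H3). Qed.

Lemma card_rev i (X Y : obj C) : (1 <= i <= t)%N ->
  card_hom (shiftn i X) Y = card_hom (sh X) (shiftn (t.+1 - i) Y).
Proof.
move=> /andP [i1 it].
have [eta [Ei En]] := Hper.
rewrite -(card_hom_shn (t - i)) shiftn_add subnK //.
rewrite -(card_homL Hcat Hadd Hsh H1 H2 H3 _ (Ei X)) -(card_hom_sh Hcat Hadd Hsh H1 H2 H3).
by rewrite subSn.
Qed.

End Per.


Section Final.
Variables (k : finFieldType) (C : preTri k).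
Local Notation hom := (@Defs.hom k C).
Local Notation fT X Y := (finvect_type (@Defs.hom k C X Y)).
Local Notation cmp := (@Defs.comp k C _ _ _).
Local Notation sh := (@Defs.shift k C).
Local Notation shm := (@Defs.shiftm k C _ _).
Local Notation idm := (@Defs.idm k C).
Local Notation dist := (@Defs.dist k C _ _ _).

Hypothesis Hcat : cat_axioms C.
Hypothesis Hadd : additive_axioms C.
Hypothesis Hsh : shift_axioms C.
Hypothesis H1 : TR1 C.
Hypothesis H2 : TR2 C.
Hypothesis H3 : TR3 C.

Local Notation cA := (cmpA Hcat).
Local Notation c1l := (cmp1l Hcat).
Local Notation c1r := (cmp1r Hcat).
Local Notation c0l := (cmp0l Hcat).
Local Notation c0r := (cmp0r Hcat).
Local Notation cBl := (cmpBl Hcat).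
Local Notation cBr := (cmpBr Hcat).
Local Notation cDl := (cmpDl Hcat).
Local Notation cDr := (cmpDr Hcat).
Local Notation cNl := (cmpNl Hcat).
Local Notation cNr := (cmpNr Hcat).
Local Notation ecov := (exact_cov Hcat Hadd Hsh H1 H2 H3).
Local Notation econ := (exact_con Hcat Hadd Hsh H1 H2 H3).
Local Notation rot := (tr2 Hcat Hadd Hsh H1 H2 H3).
Local Notation tgf := (tri_gf Hcat Hadd Hsh H1 H2 H3).
Local Notation thg := (tri_hg Hcat Hadd Hsh H1 H2 H3).
Local Notation tfh := (tri_fh Hcat Hadd Hsh H1 H2 H3).
Local Notation shid := (shm_id Hcat Hadd Hsh H1 H2 H3).
Local Notation shcomp := (shm_comp Hcat Hadd Hsh H1 H2 H3).
Local Notation shN := (shmN Hcat Hadd Hsh H1 H2 H3).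
Local Notation shinj := (shm_inj Hcat Hadd Hsh H1 H2 H3).
Local Notation rot' := (tr2' Hcat Hadd Hsh H1 H2 H3).

Lemma aut_sh X : #|aut_set (sh X)| = #|aut_set X|.
Proof.
have [s sK Ks] := shm_bij Hcat Hadd Hsh H1 H2 H3 X X.
apply: (@card_bij_in _ _ _ _ (fun y : fT (sh X) (sh X) => (s y : fT X X)) (fun x : fT X X => (shm x : fT (sh X) (sh X)))).
- move=> y; rewrite !inE => /asboolP [y' [E1 E2]]; apply/asboolP.
  exists (s y'); split; apply: shinj; by rewrite shcomp !Ks shid.
- move=> x; rewrite !inE => /asboolP Ix; apply/asboolP.
  exact: (iso_shm Hcat Hadd Hsh H1 H2 H3 Ix).
- by move=> y _; rewrite Ks.
- by move=> x _; rewrite sK.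
Qed.

Lemma sum_rot Z M L :
  \sum_(x : (fT Z M * (fT M L * fT L (sh Z)))%type | `[< dist x.1 x.2.1 x.2.2 >]) #|Sset x.2.2 (- shm x.1)|
  = muln #|cone_set M L (sh Z)| #|aut_set (sh Z)|.
Proof.
rewrite -(count_total Hcat Hadd Hsh H1 H2 H3 M L (sh Z)).
have [s sK Ks] := shm_bij Hcat Hadd Hsh H1 H2 H3 Z M.
pose hh := fun x : (fT Z M * (fT M L * fT L (sh Z)))%type =>
  ((x.2.1 : fT M L), ((x.2.2 : fT L (sh Z)), (- shm x.1 : fT (sh Z) (sh M)))).
have bh : bijective hh.
  exists (fun y : (fT M L * (fT L (sh Z) * fT (sh Z) (sh M)))%type =>
     ((s (- y.2.2) : fT Z M), (y.1, y.2.1))).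
    by case=> a [b c] /=; rewrite opprK sK.
  by case=> a [b c] /=; rewrite /hh /= Ks opprK.
rewrite (reindex hh (onW_bij _ bh)) /=.
apply: eq_bigl => x; apply/asboolP/asboolP => /=; [exact: rot | exact: rot'].
Qed.

Variables (t : nat) (Hper : periodic C t) (todd : odd t) (R : rcfType) (Z M L : obj C).

Definition ee (i : nat) : int := (-1)^+i.
Definition QL : R := \prod_(1 <= i < t.+1) ((card_hom (shiftn i Z) L)%:R : R) ^ ee i.
Definition PML : R := \prod_(1 <= i < t.+1)
  (((card_hom (shiftn i M) L)%:R : R) ^ ee i / ((card_hom (shiftn i L) L)%:R : R) ^ ee i).
Definition PZM : R := \prod_(1 <= i < t.+1)
  (((card_hom (shiftn i Z) M)%:R : R) ^ ee i / ((card_hom (shiftn i Z) Z)%:R : R) ^ ee i).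

Lemma natpos (n : nat) : (0 < n)%N -> (0 : R) < n%:R.
Proof. by rewrite ltr0n. Qed.

Lemma card_hom_gt0 (X Y : obj C) : (0 < card_hom X Y)%N.
Proof. by apply/card_gt0P; exists 0. Qed.

Lemma prod_pos (F : nat -> nat) (HF : forall i, (0 < F i)%N) :
  (0 : R) < \prod_(1 <= i < t.+1) (F i)%:R ^ ee i.
Proof. by apply: prodr_gt0 => i _; apply: exprz_gt0; apply: natpos. Qed.

Lemma cpos W X Y (x : hom X Y) : (0 < #|cimg W x|)%N.
Proof. apply/card_gt0P; exists 0; apply/imsetP; exists 0 => //; by rewrite c0l. Qed.
Lemma dpos W X Y (x : hom X Y) : (0 < #|dimg W x|)%N.
Proof. apply/card_gt0P; exists 0; apply/imsetP; exists 0 => //; by rewrite c0r. Qed.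

Lemma PML_eq (f : hom Z M) (g : hom M L) (h : hom L (sh Z)) (Dt : dist f g h) :
  PML = QL * ((rh h 0)%:R)^+2.
Proof.
have nz : forall n : nat, (0 < n)%N -> (n%:R : R) != 0 by move=> n n0; rewrite pnatr_eq0 -lt0n.
have key := @key_alg R t todd (fun i => (rf L f i)%:R) (fun i => (rg g i)%:R) (fun i => (rh h i)%:R)
  (fun i => nz _ (cpos _ _)) (fun i => nz _ (cpos _ _)) (fun i => nz _ (cpos _ _)).
rewrite /PML prodf_div.
have EM : \prod_(1 <= i < t.+1) ((card_hom (shiftn i M) L)%:R : R) ^ ee i =
   \prod_(1 <= i < t.+1) ((rf L f i)%:R * (rg g i)%:R) ^ ((-1)^+i : int).
  by apply: eq_bigr => i _; rewrite (con_M Hcat Hadd Hsh H1 H2 H3 Hper todd Dt) natrM mulrC.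
have EL : \prod_(1 <= i < t.+1) ((card_hom (shiftn i L) L)%:R : R) ^ ee i =
   \prod_(1 <= i < t.+1) ((rg g i)%:R * (rh h i)%:R) ^ ((-1)^+i : int).
  by apply: eq_bigr => i _; rewrite (con_L Hcat Hadd Hsh H1 H2 H3 Hper todd Dt) natrM mulrC.
have EZ : QL = \prod_(1 <= i < t.+1) ((rh h i.-1)%:R * (rf L f i)%:R) ^ ((-1)^+i : int).
  apply: eq_big_nat => -[//|i] _.
  by rewrite (con_Z Hcat Hadd Hsh H1 H2 H3 Hper todd Dt) natrM mulrC.
have PL : (0 : R) < \prod_(1 <= i < t.+1) ((card_hom (shiftn i L) L)%:R : R) ^ ee i.
  by apply: prod_pos => i; apply: card_hom_gt0.
rewrite EM key -EL -EZ (rh_per Hcat Hadd Hsh H1 H2 H3 Hper todd Dt).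
by rewrite -mulrA mulrC mulKf ?expr2 // gt_eqF.
Qed.

Lemma Erev (Y : obj C) :
  \prod_(1 <= i < t.+1) ((card_hom (shiftn i Z) Y)%:R : R) ^ ee i =
  \prod_(1 <= i < t.+1) ((card_hom (sh Z) (shiftn i Y))%:R : R) ^ ee i.
Proof.
rewrite -(prod_rev todd (fun j => ((card_hom (sh Z) (shiftn j Y))%:R : R))).
apply: eq_big_nat => i /andP [i1 it].
by rewrite (card_rev Hcat Hadd Hsh H1 H2 H3 Hper) // i1 -ltnS.
Qed.

Lemma PZM_eq (f : hom Z M) (g : hom M L) (h : hom L (sh Z)) (Dt : dist f g h) :
  PZM = QL * ((sh_ h 0)%:R)^+2.
Proof.
have nz : forall n : nat, (0 < n)%N -> (n%:R : R) != 0 by move=> n n0; rewrite pnatr_eq0 -lt0n.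
have key := @key_alg R t todd (fun i => (sf f i)%:R) (fun i => (sg Z g i)%:R) (fun i => (sh_ h i)%:R)
  (fun i => nz _ (dpos _ _)) (fun i => nz _ (dpos _ _)) (fun i => nz _ (dpos _ _)).
rewrite /PZM prodf_div !Erev.
have EM : \prod_(1 <= i < t.+1) ((card_hom (sh Z) (shiftn i M))%:R : R) ^ ee i =
   \prod_(1 <= i < t.+1) ((sf f i)%:R * (sg Z g i)%:R) ^ ((-1)^+i : int).
  by apply: eq_bigr => i _; rewrite (cov_M Hcat Hadd Hsh H1 H2 H3 Hper todd Dt) natrM.
have EL : QL = \prod_(1 <= i < t.+1) ((sg Z g i)%:R * (sh_ h i)%:R) ^ ((-1)^+i : int).
  by rewrite /QL Erev; apply: eq_bigr => i _; rewrite (cov_L Hcat Hadd Hsh H1 H2 H3 Hper todd Dt) natrM.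
have EZ : \prod_(1 <= i < t.+1) ((card_hom (sh Z) (shiftn i Z))%:R : R) ^ ee i =
   \prod_(1 <= i < t.+1) ((sh_ h i.-1)%:R * (sf f i)%:R) ^ ((-1)^+i : int).
  apply: eq_big_nat => -[//|i] _.
  by rewrite (cov_Z Hcat Hadd Hsh H1 H2 H3 Hper todd Dt) natrM.
have PZ : (0 : R) < \prod_(1 <= i < t.+1) ((card_hom (sh Z) (shiftn i Z))%:R : R) ^ ee i.
  by apply: prod_pos => i; apply: card_hom_gt0.
rewrite EM key -EL -EZ (sh_per Hcat Hadd Hsh H1 H2 H3 Hper todd Dt).
by rewrite mulrAC mulfK ?expr2 // gt_eqF.
Qed.

Lemma QL_ge0 : (0 : R) <= QL.
Proof. by apply: ltW; apply: prod_pos => i; apply: card_hom_gt0. Qed.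

Lemma KL_eq (f : hom Z M) (g : hom M L) (h : hom L (sh Z)) (Dt : dist f g h) :
  Num.sqrt PML = Num.sqrt QL * (rh h 0)%:R.
Proof. by rewrite (PML_eq Dt) sqrtrM ?QL_ge0 // sqrtr_sqr ger0_norm. Qed.

Lemma KZ_eq (f : hom Z M) (g : hom M L) (h : hom L (sh Z)) (Dt : dist f g h) :
  Num.sqrt PZM = Num.sqrt QL * (sh_ h 0)%:R.
Proof. by rewrite (PZM_eq Dt) sqrtrM ?QL_ge0 // sqrtr_sqr ger0_norm. Qed.

Lemma tri_id (f : hom Z M) (g : hom M L) (h : hom L (sh Z)) (Dt : dist f g h) :
  (#|Sset g h|%:R : R) * Num.sqrt PZM = #|Sset h (- shm f)|%:R * Num.sqrt PML.
Proof.
have E1 := congr1 (fun n => n%:R : R) (P1 Hcat Hadd Hsh H1 H2 H3 Dt).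
have E2 := congr1 (fun n => n%:R : R) (P2 Hcat Hadd Hsh H1 H2 H3 Dt).
rewrite /= !natrM in E1 E2.
rewrite (KL_eq Dt) (KZ_eq Dt).
have Hnz : ((card_hom (sh Z) L)%:R : R) != 0 by rewrite pnatr_eq0 -lt0n card_hom_gt0.
apply: (mulIf Hnz).
have -> : (#|Sset g h|%:R : R) * (Num.sqrt QL * (sh_ h 0)%:R) * (card_hom (sh Z) L)%:R =
  (#|Sset g h|%:R * (card_hom (sh Z) L)%:R) * (Num.sqrt QL * (sh_ h 0)%:R) by ring.
have -> : (#|Sset h (- shm f)|%:R : R) * (Num.sqrt QL * (rh h 0)%:R) * (card_hom (sh Z) L)%:R =
  (#|Sset h (- shm f)|%:R * (card_hom (sh Z) L)%:R) * (Num.sqrt QL * (rh h 0)%:R) by ring.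
rewrite E1 E2 /rh /sh_ /=; ring.
Qed.

Lemma sum_id : (#|cone_set Z M L| * #|aut_set L|)%:R * Num.sqrt PZM =
  (#|cone_set M L (sh Z)| * #|aut_set (sh Z)|)%:R * Num.sqrt PML :> R.
Proof.
rewrite -(count_total Hcat Hadd Hsh H1 H2 H3 Z M L) -(sum_rot Z M L) !natr_sum !mulr_suml.
by apply: eq_bigr => x /asboolP Dx; exact: tri_id Dx.
Qed.

Lemma aut_gt0 (X : obj C) : (0 < #|aut_set X|)%N.
Proof. apply/card_gt0P; exists (idm X); rewrite inE; apply/asboolP; exact: iso_id. Qed.

Lemma main :
  (#|cone_set M L (sh Z)|%:R / #|aut_set L|%:R : R) * Num.sqrt PML =
  (#|cone_set Z M L|%:R / #|aut_set Z|%:R : R) * Num.sqrt PZM.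
Proof.
case: (pselect (exists (f : hom Z M) (g : hom M L) (h : hom L (sh Z)), dist f g h)) => [[f [g [h Dt]]]|N].
  have S := sum_id; rewrite aut_sh !natrM in S.
  have nA : forall X : obj C, (#|aut_set X|%:R : R) != 0.
    by move=> X; rewrite pnatr_eq0 -lt0n aut_gt0.
  have nL := nA L; have nZ := nA Z.
  transitivity ((#|cone_set M L (sh Z)|%:R * #|aut_set Z|%:R * Num.sqrt PML) /
     (#|aut_set L|%:R * #|aut_set Z|%:R) : R).
    by field; rewrite nL nZ.
  rewrite -S; field; by rewrite nL nZ.
have E1 : #|cone_set Z M L| = 0%N.
  apply/eqP; rewrite cards_eq0; apply/eqP/setP => x; rewrite !inE.
  by apply/asboolP => -[g [h D]]; apply: N; exists x, g, h.
have E2 : #|cone_set M L (sh Z)| = 0%N.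
  apply/eqP; rewrite cards_eq0; apply/eqP/setP => x; rewrite !inE.
  apply/asboolP => -[h [e D]]; apply: N.
  have [e0 Ee] := shm_surj Hcat Hadd Hsh H1 H2 H3 e.
  exists (- e0), x, h; apply: rot'; by rewrite shN opprK -Ee.
by rewrite E1 E2 !mul0r.
Qed.

End Final.

End Aux.
Import Aux.

Theorem corollary2p3 (k : finFieldType) (C : preTri k) (t : nat)
  (HC : periodic_tricat C t) (t_gt1 : (1 < t)%N) (t_odd : odd t)
  (R : rcfType) (Z L M : obj C) :
  (#|cone_set M L (shift C Z)|%:R / #|aut_set L|%:R : R) *
    Num.sqrt (\prod_(1 <= i < t.+1)
        (((card_hom (shiftn i M) L)%:R : R) ^ ((-1) ^+ i : int)
          / ((card_hom (shiftn i L) L)%:R : R) ^ ((-1) ^+ i : int)))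
  =
  (#|cone_set Z M L|%:R / #|aut_set Z|%:R : R) *
    Num.sqrt (\prod_(1 <= i < t.+1)
        (((card_hom (shiftn i Z) M)%:R : R) ^ ((-1) ^+ i : int)
          / ((card_hom (shiftn i Z) Z)%:R : R) ^ ((-1) ^+ i : int))).
Proof.
case: HC => [[Hcat Hadd] Hsh [HT1 HT2] [HT3 _] [_ Hper]].
exact: (main Hcat Hadd Hsh HT1 HT2 HT3 Hper t_odd R Z M L).
Qed.
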